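(* Let $k\ge1$, $GP=GP(3k,k)$, and let $\gamma:E(GP)\to\{1,2,3\}$ be a proper edge colouring. Let $(a,b,c)$ be a permutation of $(1,2,3)$ such that $\gamma_1$ is a vertex of $T_\pm$ or of $H_\pm$. Then $$\operatorname{sign}(\gamma)=\prod_{i=1}^k \operatorname{sign}(\gamma_i,\gamma_{i+1}).$$
   Context: $GP(3k,k)$ has vertex set $\{u_i,v_i : i\in\mathbb{Z}_{3k}\}$ and edges $u_iu_{i+1}$, $u_iv_i$, $v_iv_{i+k}$ for $i\in\mathbb{Z}_{3k}$ (indices modulo $3k$). For $i=1,\dots,k+1$ let $\gamma_i=(\gamma(u_iu_{i+1}),\gamma(u_{k+i}u_{k+i+1}),\gamma(u_{2k+i}u_{2k+i+1}))$, written as a string $xyz$. Vertex signs: $\operatorname{sign}_\gamma(u_i)=+$ if $(\gamma(u_{i-1}u_i),\gamma(u_iu_{i+1}),\gamma(u_iv_i))\in\{123,231,312\}$ and $-$ otherwise; $\operatorname{sign}_\gamma(v_i)=+$ if $(\gamma(v_{k+i}v_i),\gamma(v_iv_{2k+i}),\gamma(v_iu_i))\in\{123,231,312\}$ and $-$ otherwise. Then $\operatorname{sign}(\gamma)=\prod_{w\in V(GP)}\operatorname{sign}_\gamma(w)$ (with $+,-$ multiplied as $\pm1$). Given the permutation $(a,b,c)$: $T_\pm$ is the directed graph on vertices $abc,bca,cab$ having both arcs between each pair, with signs $\operatorname{sign}(abc,cab)=\operatorname{sign}(cab,bca)=\operatorname{sign}(bca,abc)=+$ and the three reverse arcs negative.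 $H_\pm$ is the directed graph on the $6$-cycle $aba-bcc-aab-cbc-baa-ccb-aba$ with both arcs for each edge, where the arcs $aba\to bcc$, $bcc\to aab$, $aab\to cbc$, $cbc\to baa$, $baa\to ccb$, $ccb\to aba$ have sign $+$ and their reverses have sign $-$. $\operatorname{sign}(x,y)$ denotes the sign of the arc from $x$ to $y$. *)

(* Defs.v *)
From mathcomp Require Import all_boot all_order all_algebra.
Set Implicit Arguments. Unset Strict Implicit. Unset Printing Implicit Defensive.
Import GRing.Theory Num.Theory.

(* Vertex indices of GP(3k,k) live in Z_{3k}; we use the ordinal type
   'I_((3*k).-1.+1), which is 'I_(3*k) whenever k >= 1. *)
Definition GPN (k : nat) := (3 * k).-1.+1.

(* vertices: (false, i) = u_i, (true, i) = v_i *)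
Definition GPV (k : nat) : finType := (bool * 'I_(GPN k))%type.

Definition gp_u (k i : nat) : GPV k := (false, inord (i %% (3 * k))).
Definition gp_v (k i : nat) : GPV k := (true, inord (i %% (3 * k))).

Definition GPE (k : nat) : {set {set GPV k}} :=
  [set [set gp_u k i; gp_u k i.+1] | i : 'I_(GPN k)] :|:
  [set [set gp_u k i; gp_v k i] | i : 'I_(GPN k)] :|:
  [set [set gp_v k i; gp_v k (i + k)] | i : 'I_(GPN k)].

Definition proper_3_edge_colouring (k : nat) (g : {set GPV k} -> nat) : Prop :=
  (forall e, e \in GPE k -> 1 <= g e <= 3) /\
  (forall e f, e \in GPE k -> f \in GPE k -> e != f ->
     e :&: f != set0 -> g e != g f).

Definition cyc123 (x y z : nat) : bool :=
  (x, y, z) \in [:: (1, 2, 3); (2, 3, 1); (3, 1, 2)].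

Definition pmsign (b : bool) : int := if b then 1%R else (-1)%R.

Definition vsign (k : nat) (g : {set GPV k} -> nat) (w : GPV k) : int :=
  let i := nat_of_ord w.2 in
  if ~~ w.1 then
    pmsign (cyc123 (g [set gp_u k (i + 3 * k).-1; gp_u k i])
                   (g [set gp_u k i; gp_u k i.+1])
                   (g [set gp_u k i; gp_v k i]))
  else
    pmsign (cyc123 (g [set gp_v k (k + i); gp_v k i])
                   (g [set gp_v k i; gp_v k (2 * k + i)])
                   (g [set gp_v k i; gp_u k i])).

Definition gsign (k : nat) (g : {set GPV k} -> nat) : int :=
  (\prod_(w : GPV k) vsign g w)%R.

Definition gam (k : nat) (g : {set GPV k} -> nat) (i : nat) : nat * nat * nat :=
  (g [set gp_u k i; gp_u k i.+1],
   g [set gp_u k (k + i); gp_u k (k + i).+1],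
   g [set gp_u k (2 * k + i); gp_u k (2 * k + i).+1]).

Definition T_vertices (a b c : nat) : seq (nat * nat * nat) :=
  [:: (a, b, c); (b, c, a); (c, a, b)].
Definition H_vertices (a b c : nat) : seq (nat * nat * nat) :=
  [:: (a, b, a); (b, c, c); (a, a, b); (c, b, c); (b, a, a); (c, c, b)].

(* Positive arcs of T_pm and H_pm; the reverse arcs are the negative ones. *)
Definition pos_arcs (a b c : nat) : seq ((nat * nat * nat) * (nat * nat * nat)) :=
  [:: ((a, b, c), (c, a, b)); ((c, a, b), (b, c, a)); ((b, c, a), (a, b, c));
      ((a, b, a), (b, c, c)); ((b, c, c), (a, a, b)); ((a, a, b), (c, b, c));
      ((c, b, c), (b, a, a)); ((b, a, a), (c, c, b)); ((c, c, b), (a, b, a))].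

(* sign(x,y) of the arc x -> y in T_pm or H_pm.  For pairs that are not
   arcs the value is irrelevant; we default to +1. *)
Definition arc_sign (a b c : nat) (x y : nat * nat * nat) : int :=
  if (x, y) \in pos_arcs a b c then 1%R
  else if (y, x) \in pos_arcs a b c then (-1)%R
  else 1%R.

(* Main.v *)
Require Import Defs.
From mathcomp Require Import all_boot all_order all_algebra.
From mathcomp Require Import zify.
Import GRing.Theory Num.Theory.
Set Implicit Arguments. Unset Strict Implicit. Unset Printing Implicit Defensive.

Definition inTH (a b c : nat) (x : nat * nat * nat) :=
  (x \in T_vertices a b c) || (x \in H_vertices a b c).

Ltac c3 v := case: v => [|[|[|[|v]]]] //=.

Lemma fin (a b c x0 x1 x2 : nat) :
  perm_eq [:: a; b; c] [:: 1; 2; 3]%N -> inTH a b c (x0,x1,x2) ->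
  forall t0 t2 s0 y0 t1 s1 y1 s2 y2 : nat,
  [&& (0 < t0 < 4)%N, (0 < t2 < 4)%N & t0 != t2] ->
  [&& (0 < s0 < 4)%N, t0 != s0, t2 != s0 & x0 != s0] ->
  [&& (0 < y0 < 4)%N, x0 != y0 & y0 != s0] ->
  [&& (0 < t1 < 4)%N, t1 != t0 & t2 != t1] ->
  [&& (0 < s1 < 4)%N, t1 != s1, t0 != s1 & x1 != s1] ->
  [&& (0 < y1 < 4)%N, x1 != y1 & y1 != s1] ->
  [&& (0 < s2 < 4)%N, t2 != s2, t1 != s2 & x2 != s2] ->
  [&& (0 < y2 < 4)%N, x2 != y2 & y2 != s2] ->
  inTH a b c (y0,y1,y2) /\
  (pmsign (cyc123 x0 y0 s0) * pmsign (cyc123 t0 t2 s0) *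
  (pmsign (cyc123 x1 y1 s1) * pmsign (cyc123 t1 t0 s1)) *
  (pmsign (cyc123 x2 y2 s2) * pmsign (cyc123 t2 t1 s2)) =
  arc_sign a b c (x0,x1,x2) (y0,y1,y2))%R.
Proof.
move=> habc.
have: (a \in [:: 1; 2; 3]%N) && (b \in [:: 1; 2; 3]%N) && (c \in [:: 1; 2; 3]%N) && uniq [:: a; b; c].
  by rewrite -!(perm_mem habc) !inE !eqxx !orbT (perm_uniq habc).
clear habc.
c3 a; c3 b; c3 c; c3 x0; c3 x1; c3 x2.
all: move=> _ _ t0 t2 s0 y0 t1 s1 y1 s2 y2.
all: c3 t0; c3 t2.
all: c3 s0. all: c3 y0. 
all: c3 t1. all: c3 s1. all: c3 y1. all: c3 s2. all: c3 y2.

Qed.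


Lemma U_eq k m n q : (m = n + q * (3 * k))%N -> gp_u k m = gp_u k n.
Proof. by move=> ->; rewrite /gp_u addnC modnMDl. Qed.
Lemma V_eq k m n q : (m = n + q * (3 * k))%N -> gp_v k m = gp_v k n.
Proof. by move=> ->; rewrite /gp_v addnC modnMDl. Qed.

Lemma mod_ltN k m : (0 < k)%N -> (m %% (3 * k) < (3 * k).-1.+1)%N.
Proof. by move=> hk; rewrite prednK ?ltn_pmod ?muln_gt0. Qed.

Lemma gp_neq_aux k m n q d : (0 < k)%N -> (0 < d < 3 * k)%N ->
  (m + q * (3 * k) = n + d)%N -> m %% (3 * k) != n %% (3 * k).
Proof.
move=> hk hd e; apply/negP => /eqP E.
have : (n + d == n + 0 %[mod 3 * k]).
  by rewrite -e addn0 addnC modnMDl E.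
rewrite eqn_modDl mod0n modn_small; last by case/andP: hd.
by case/andP: hd => /lt0n_neq0 /negbTE ->.
Qed.

Lemma U_neq k m n q d : (0 < k)%N -> (0 < d < 3 * k)%N ->
  (m + q * (3 * k) = n + d)%N -> gp_u k m != gp_u k n.
Proof.
move=> hk hd e; apply/negP => /eqP [] /(congr1 val).
rewrite /= !inordK ?mod_ltN // => E.
by move: (gp_neq_aux hk hd e); rewrite E eqxx.
Qed.
Lemma V_neq k m n q d : (0 < k)%N -> (0 < d < 3 * k)%N ->
  (m + q * (3 * k) = n + d)%N -> gp_v k m != gp_v k n.
Proof.
move=> hk hd e; apply/negP => /eqP [] /(congr1 val).
rewrite /= !inordK ?mod_ltN // => E.
by move: (gp_neq_aux hk hd e); rewrite E eqxx.
Qed.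

Lemma eu k n : (0 < k)%N -> [set gp_u k n; gp_u k n.+1] \in GPE k.
Proof.
move=> hk; rewrite /GPE !inE; apply/orP; left; apply/orP; left.
apply/imsetP; exists (inord (n %% (3 * k)) : 'I_(GPN k)) => //.
rewrite inordK ?mod_ltN //.
congr [set _; _]; rewrite /gp_u ?modn_mod //.
by congr (_, inord _); rewrite -[in RHS]addn1 modnDml addn1.
Qed.
Lemma es k n : (0 < k)%N -> [set gp_u k n; gp_v k n] \in GPE k.
Proof.
move=> hk; rewrite /GPE !inE; apply/orP; left; apply/orP; right.
apply/imsetP; exists (inord (n %% (3 * k)) : 'I_(GPN k)) => //.
rewrite inordK ?mod_ltN //.
by congr [set _; _]; rewrite /gp_u /gp_v ?modn_mod.
Qed.
Lemma et k n : (0 < k)%N -> [set gp_v k n; gp_v k (n + k)] \in GPE k.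
Proof.
move=> hk; rewrite /GPE !inE; apply/orP; right.
apply/imsetP; exists (inord (n %% (3 * k)) : 'I_(GPN k)) => //.
rewrite inordK ?mod_ltN //.
congr [set _; _]; rewrite /gp_v ?modn_mod //.
by congr (_, inord _); rewrite modnDml.
Qed.

Definition oc k (g : {set GPV k} -> nat) n := g [set gp_u k n; gp_u k n.+1].
Definition sc k (g : {set GPV k} -> nat) n := g [set gp_u k n; gp_v k n].
Definition tc k (g : {set GPV k} -> nat) n := g [set gp_v k n; gp_v k (n + k)].

Definition Fu k (g : {set GPV k} -> nat) n : int :=
  pmsign (cyc123 (g [set gp_u k (n + 3 * k).-1; gp_u k n])
                 (g [set gp_u k n; gp_u k n.+1])
                 (g [set gp_u k n; gp_v k n])).
Definition Fv k (g : {set GPV k} -> nat) n : int :=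
  pmsign (cyc123 (g [set gp_v k (k + n); gp_v k n])
                 (g [set gp_v k n; gp_v k (2 * k + n)])
                 (g [set gp_v k n; gp_u k n])).
Definition F k (g : {set GPV k} -> nat) n : int := (Fu g n * Fv g n)%R.

Lemma Fform k (g : {set GPV k} -> nat) n n' tn tn2 :
  g [set gp_u k (n + 3 * k).-1; gp_u k n] = oc g n' ->
  g [set gp_v k (k + n); gp_v k n] = tn ->
  g [set gp_v k n; gp_v k (2 * k + n)] = tn2 ->
  F g n = (pmsign (cyc123 (oc g n') (oc g n) (sc g n)) *
           pmsign (cyc123 tn tn2 (sc g n)))%R.
Proof. by move=> e1 e2 e3; rewrite /F /Fu /Fv e1 e2 e3 [[set gp_v k n; gp_u k n]]setUC. Qed.

Lemma adj k (g : {set GPV k} -> nat) (hg : proper_3_edge_colouring g) e f p q :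
  e \in GPE k -> f \in GPE k -> p \in e -> p \in f -> q \in e -> q \notin f ->
  g e != g f.
Proof.
move=> he hf pe pf qe qf; apply: hg.2 => //.
  by apply/eqP => E; move: qf; rewrite -E qe.
by apply/set0Pn; exists p; rewrite inE pe pf.
Qed.

Lemma rg k (g : {set GPV k} -> nat) (hg : proper_3_edge_colouring g) e :
  e \in GPE k -> (0 < g e < 4)%N.
Proof. by move/(hg.1 e). Qed.

Ltac veq := first
  [ apply: (U_eq (q:=0)); lia | apply: (U_eq (q:=1)); lia | apply: (U_eq (q:=2)); lia
  | apply: (V_eq (q:=0)); lia | apply: (V_eq (q:=1)); lia | apply: (V_eq (q:=2)); lia
  | symmetry; apply: (U_eq (q:=1)); lia | symmetry; apply: (U_eq (q:=2)); lia
  | symmetry; apply: (V_eq (q:=1)); lia | symmetry; apply: (V_eq (q:=2)); lia ].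

Ltac vneq1 := first [ by [] |
  match goal with hk : is_true (0 < ?k)%N |- _ =>
   first [ refine (U_neq (q:=0) (d:=1) hk _ _); lia
         | refine (U_neq (q:=0) (d:=2) hk _ _); lia
         | refine (U_neq (q:=1) (d:=1) hk _ _); lia
         | refine (U_neq (q:=1) (d:=2) hk _ _); lia
         | refine (U_neq (q:=1) (d:=3*k-1) hk _ _); lia
         | refine (U_neq (q:=1) (d:=3*k-2) hk _ _); lia
         | refine (U_neq (q:=0) (d:=k) hk _ _); lia
         | refine (U_neq (q:=0) (d:=2*k) hk _ _); lia
         | refine (U_neq (q:=1) (d:=k) hk _ _); lia
         | refine (U_neq (q:=1) (d:=2*k) hk _ _); lia
         | refine (V_neq (q:=0) (d:=k) hk _ _); lia
         | refine (V_neq (q:=0) (d:=2*k) hk _ _); lia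
         | refine (V_neq (q:=1) (d:=k) hk _ _); lia
         | refine (V_neq (q:=1) (d:=2*k) hk _ _); lia
         | refine (V_neq (q:=2) (d:=k) hk _ _); lia
         | refine (V_neq (q:=2) (d:=2*k) hk _ _); lia ] end ].
Ltac vneq := first [ vneq1 | rewrite eq_sym; vneq1 ].

Ltac edge := match goal with hk : is_true (0 < ?k)%N |- _ =>
  first [ exact: eu hk | exact: es hk | exact: et hk ] end.
Ltac memb := rewrite !inE; apply/orP; first [left; apply/eqP; veq | right; apply/eqP; veq].
Ltac nmemb := rewrite !inE negb_or; apply/andP; split; vneq.
Ltac dist hg p q := rewrite /oc /sc /tc; apply: (adj hg (p:=p) (q:=q));
  [edge | edge | memb | memb | memb | nmemb].
Ltac geq := rewrite /oc /sc /tc; congr (_ _);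
  first [ congr [set _; _]; veq | rewrite setUC; congr [set _; _]; veq ].
Ltac rng hg := rewrite /oc /sc /tc; apply: (rg hg); edge.

Lemma step k (hk : (0 < k)%N) (g : {set GPV k} -> nat)
    (hg : proper_3_edge_colouring g) (a b c : nat)
    (habc : perm_eq [:: a; b; c] [:: 1; 2; 3]%N) i :
  inTH a b c (gam g i) ->
  inTH a b c (gam g i.+1) /\
  (F g i.+1 * F g (k + i.+1) * F g (2 * k + i.+1))%R =
     arc_sign a b c (gam g i) (gam g i.+1).
Proof.
move=> Hi.
have := @fin a b c (oc g i) (oc g (k+i)) (oc g (2*k+i)) habc Hi
  (tc g i.+1) (tc g (2*k+i.+1)) (sc g i.+1) (oc g i.+1) (tc g (k+i.+1))
  (sc g (k+i.+1)) (oc g (k+i.+1)) (sc g (2*k+i.+1)) (oc g (2*k+i.+1)).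
case.
- apply/and3P; split; [by rng hg | by rng hg |].
  by dist hg (gp_v k i.+1) (gp_v k (i.+1 + k)).
- apply/and4P; split; first by rng hg.
  + by dist hg (gp_v k i.+1) (gp_v k (i.+1 + k)).
  + by dist hg (gp_v k (2 * k + i.+1 + k)) (gp_v k (2 * k + i.+1)).
  + by dist hg (gp_u k i.+1) (gp_u k i).
- apply/and3P; split; first by rng hg.
  + by dist hg (gp_u k i.+1) (gp_u k i).
  + by dist hg (gp_u k i.+1) (gp_u k i.+2).
- apply/and3P; split; first by rng hg.
  + by dist hg (gp_v k (k + i.+1)) (gp_v k (k + i.+1 + k)).
  + by dist hg (gp_v k (2 * k + i.+1)) (gp_v k (2 * k + i.+1 + k)).
- apply/and4P; split; first by rng hg.
  + by dist hg (gp_v k (k + i.+1)) (gp_v k (k + i.+1 + k)).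
  + by dist hg (gp_v k (i.+1 + k)) (gp_v k i.+1).
  + by dist hg (gp_u k (k + i).+1) (gp_u k (k + i)).
- apply/and3P; split; first by rng hg.
  + by dist hg (gp_u k (k + i).+1) (gp_u k (k + i)).
  + by dist hg (gp_u k (k + i.+1)) (gp_u k (k + i.+1).+1).
- apply/and4P; split; first by rng hg.
  + by dist hg (gp_v k (2 * k + i.+1)) (gp_v k (2 * k + i.+1 + k)).
  + by dist hg (gp_v k (k + i.+1 + k)) (gp_v k (k + i.+1)).
  + by dist hg (gp_u k (2 * k + i).+1) (gp_u k (2 * k + i)).
- apply/and3P; split; first by rng hg.
  + by dist hg (gp_u k (2 * k + i).+1) (gp_u k (2 * k + i)).
  + by dist hg (gp_u k (2 * k + i.+1)) (gp_u k (2 * k + i.+1).+1).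
move=> H1 E1; split; first exact: H1.
rewrite (@Fform _ _ i.+1 i (tc g i.+1) (tc g (2 * k + i.+1))); [|geq|geq|geq].
rewrite (@Fform _ _ (k + i.+1) (k + i) (tc g (k + i.+1)) (tc g i.+1)); [|geq|geq|geq].
rewrite (@Fform _ _ (2 * k + i.+1) (2 * k + i) (tc g (2 * k + i.+1)) (tc g (k + i.+1))); [|geq|geq|geq].
exact: E1.
Qed.

Lemma prod_shift (G : nat -> int) P m : (m <= P)%N -> (forall n, G (n + P)%N = G n) ->
  (\prod_(m <= i < m + P) G i = \prod_(0 <= i < P) G i)%R.
Proof.
move=> hmP hG.
have e : (\prod_(P <= i < m + P) G i = \prod_(0 <= i < m) G i)%R.
  rewrite -{1}(add0n P) big_addn addnK; apply: eq_bigr => i _; exact: hG.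
rewrite (big_cat_nat (n := P)) ?leq_addl // e.
by rewrite [RHS](big_cat_nat (n := m)) //= mulrC.
Qed.

Lemma prod_thirds (G : nat -> int) m k :
  (\prod_(m <= i < m + 3 * k) G i =
   \prod_(m <= i < m + k) (G i * G (k + i)%N * G (2 * k + i)%N))%R.
Proof.
have s1 : (\prod_(m + k <= i < m + 2 * k) G i = \prod_(m <= i < m + k) G (k + i)%N)%R.
  rewrite big_addn. have -> : (m + 2 * k - k = m + k)%N by lia.
  by apply: eq_bigr => i _; rewrite addnC.
have s2 : (\prod_(m + 2 * k <= i < m + 3 * k) G i = \prod_(m <= i < m + k) G (2 * k + i)%N)%R.
  rewrite big_addn. have -> : (m + 3 * k - 2 * k = m + k)%N by lia.
  by apply: eq_bigr => i _; rewrite addnC.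
rewrite (big_cat_nat (n := m + k)); [| lia | lia].
rewrite (big_cat_nat (n := m + 2 * k) (m := m + k)); [| lia | lia].
by rewrite s1 s2 /= mulrA -!big_split.
Qed.

Lemma F_per k (hk : (0 < k)%N) (g : {set GPV k} -> nat) n : F g (n + 3 * k)%N = F g n.
Proof.
rewrite /F /Fu /Fv; congr (_ * _)%R; congr (pmsign (cyc123 _ _ _)); geq.
Qed.

Unset Implicit Arguments.
Local Open Scope ring_scope.

Theorem lemma10 (k : nat) (hk : (1 <= k)%N) (g : {set GPV k} -> nat)
    (hg : proper_3_edge_colouring g) (a b c : nat)
    (habc : perm_eq [:: a; b; c] [:: 1; 2; 3]%N)
    (h1 : (gam g 1 \in T_vertices a b c) || (gam g 1 \in H_vertices a b c)) :
  gsign g = \prod_(1 <= i < k.+1) arc_sign a b c (gam g i) (gam g i.+1).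
Proof.
have inv : forall i, (1 <= i)%N -> inTH a b c (gam g i).
  elim=> [//|[|i] IH _]; first exact: h1.
  exact: (step hk hg habc (IH isT)).1.
have E0 : gsign g = \prod_(0 <= i < 3 * k) F g i.
  have -> : gsign g = \prod_(x : bool) \prod_(i : 'I_(GPN k)) vsign g (x, i).
    by rewrite /gsign pair_big; apply: eq_bigr => -[x y].
  rewrite big_bool /= -big_split /=.
  have -> : (3 * k = GPN k)%N by rewrite /GPN prednK // muln_gt0.
  rewrite big_mkord; apply: eq_bigr => i _; by rewrite /F mulrC.
rewrite E0 -(prod_shift (m := 2)); [| lia | exact: F_per].
rewrite prod_thirds big_add1.
have -> : (2 + k).-1 = k.+1 by lia.
apply: eq_big_nat => i /andP [hi _].
exact: (step hk hg habc (inv i hi)).2.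
Qed.
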